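(* Let $\Phi:\mathbb{R}^n\to(-\infty,\infty]$ be a proper lower semicontinuous convex function, and let $S\subset\mathbb{R}\times\mathbb{R}^n$ be a nonempty set with $\Phi(y)=\sup_{(\alpha,b)\in S}(\alpha+b\cdot y)$ for all $y\in\mathbb{R}^n$. Let $\psi:[0,\infty)\to[0,\infty)$ satisfy $\lim_{t\to\infty}\psi(t)/t=\infty$. Define, for $x\ge0$, $y\in\mathbb{R}^n$, $$\tilde\varphi(x,y):=\sup_{(\alpha,b)\in S}\bigl(\alpha+b\cdot y-\psi(|\alpha|+|b|)\,x\bigr).$$ Then $\tilde\varphi:[0,\infty)\times\mathbb{R}^n\to(-\infty,\infty]$ is convex and lower semicontinuous, $\tilde\varphi(0,y)=\Phi(y)$ for all $y$, $\tilde\varphi(x,y)<\infty$ for all $x>0$, $y\in\mathbb{R}^n$, $x\mapsto\tilde\varphi(x,y)$ is nonincreasing, and $\lim_{x\to0+}\tilde\varphi(x,y)=\Phi(y)$ for every $y\in\mathbb{R}^n$.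
   Context: A convex function is proper if it is not identically $+\infty$. $|\cdot|$ denotes the absolute value on $\mathbb{R}$ and the Euclidean norm on $\mathbb{R}^n$. *)

(* Defs.v *)
From HB Require Import structures.
From mathcomp Require Import all_boot all_order all_algebra.
From mathcomp Require Import all_classical all_reals all_analysis.
Set Implicit Arguments. Unset Strict Implicit. Unset Printing Implicit Defensive.
Import Order.TTheory GRing.Theory Num.Theory.
Import numFieldNormedType.Exports.
Local Open Scope classical_set_scope.
Local Open Scope ring_scope.

Definition dotv (R : realType) (n : nat) (b y : 'rV[R]_n) : R :=
  \sum_(i < n) b ord0 i * y ord0 i.

Definition enorm (R : realType) (n : nat) (b : 'rV[R]_n) : R :=
  Num.sqrt (\sum_(i < n) b ord0 i ^+ 2).

(* convexity of an extended-real valued function (never -oo in our uses)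
   on a convex set D of a real vector space *)
Definition econvex_on (R : realType) (V : lmodType R) (D : set V)
    (f : V -> \bar R) : Prop :=
  forall x y (t : R), D x -> D y -> 0 < t -> t < 1 ->
    (f (t *: x + (1 - t) *: y)%R <= t%:E * f x + (1 - t)%:E * f y)%E.

Definition lsc_on (T : topologicalType) (R : realType) (D : set T)
    (f : T -> \bar R) : Prop :=
  forall x (a : R), D x -> (a%:E < f x)%E ->
    \forall z \near x, D z -> (a%:E < f z)%E.

Definition phi_tilde (R : realType) (n : nat) (S : set (R * 'rV[R]_n))
    (psi : R -> R) (p : R * 'rV[R]_n) : \bar R :=
  ereal_sup [set ((s.1 + dotv s.2 p.2 - psi (`|s.1| + enorm s.2) * p.1)%:E)
             | s in S].

(* Main.v *)
Require Import Defs.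
From HB Require Import structures.
From mathcomp Require Import all_boot all_order all_algebra.
From mathcomp Require Import all_classical all_reals all_analysis.
From mathcomp Require Import ring lra.
Import Order.TTheory GRing.Theory Num.Theory.
Import numFieldNormedType.Exports.
Local Open Scope classical_set_scope.
Local Open Scope ring_scope.

Section H.
Variables (R : realType) (n : nat).

Lemma dotv_lin (b u v : 'rV[R]_n) (t : R) :
  dotv b (t *: u + v) = t * dotv b u + dotv b v.
Proof.
rewrite /dotv mulr_sumr -big_split /=; apply: eq_bigr => i _.
by rewrite !mxE mulrDr mulrCA.
Qed.

Lemma enorm_ge0 (b : 'rV[R]_n) : 0 <= enorm b.
Proof. exact: sqrtr_ge0. Qed.

Lemma coord_le_enorm (b : 'rV[R]_n) i : `|b ord0 i| <= enorm b.
Proof.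
rewrite /enorm -(sqrtr_sqr (b ord0 i)) ler_sqrt; last first.
  by apply: sumr_ge0 => j _; exact: sqr_ge0.
by rewrite (bigD1 i) //= lerDl; apply: sumr_ge0 => j _; exact: sqr_ge0.
Qed.

Lemma dotv_bound (b y : 'rV[R]_n) :
  dotv b y <= enorm b * \sum_(i < n) `|y ord0 i|.
Proof.
rewrite /dotv mulr_sumr; apply: ler_sum => i _.
apply: le_trans (ler_norm _) _; rewrite normrM.
by apply: ler_wpM2r => //; exact: coord_le_enorm.
Qed.

Lemma cvg_sum_gen (T : Type) (F : set_system T) (FF : Filter F) (I : Type)
  (r : seq I) (P : pred I) (f : I -> T -> R) (l : I -> R) :
  (forall i, f i z @[z --> F] --> l i) ->
  \sum_(i <- r | P i) f i z @[z --> F] --> \sum_(i <- r | P i) l i.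
Proof.
move=> hf; elim: r => [|i r IH].
  under eq_fun do rewrite big_nil.
  by rewrite big_nil; exact: cvg_cst.
under eq_fun do rewrite big_cons.
rewrite big_cons; case: (P i) => //.
exact: cvgD.
Qed.

Lemma g_cont (s : R * 'rV[R]_n) (c : R) (x : R * 'rV[R]_n) :
  s.1 + dotv s.2 z.2 - c * z.1 @[z --> x] --> s.1 + dotv s.2 x.2 - c * x.1.
Proof.
apply: cvgB; first apply: cvgD; first exact: cvg_cst.
  apply: cvg_sum_gen => i; apply: cvgM; first exact: cvg_cst.
  apply: (@cvg_comp _ _ _ (fun z : R * 'rV[R]_n => z.2) (fun M : 'rV[R]_n => M ord0 i) _ (nbhs x.2)).
    exact: cvg_snd.
  exact: coord_continuous.
apply: cvgM; first exact: cvg_cst.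
exact: cvg_fst.
Qed.
End H.
Arguments dotv_lin {R n}.
Arguments enorm_ge0 {R n}.
Arguments coord_le_enorm {R n}.
Arguments dotv_bound {R n}.
Arguments g_cont {R n}.

Lemma ub_phi (R : realType) (n : nat) (S : set (R * 'rV[R]_n)) (psi : R -> R) s p :
  S s -> ((s.1 + dotv s.2 p.2 - psi (`|s.1| + enorm s.2) * p.1)%:E
          <= phi_tilde S psi p)%E.
Proof. by move=> Ss; apply: ereal_sup_ubound; exists s. Qed.
Arguments ub_phi {R n S psi s} p.

Theorem mainTheorem6 (R : realType) (n : nat) (Phi : 'rV[R]_n -> \bar R)
  (S : set (R * 'rV[R]_n)) (psi : R -> R) :
  (* Phi : R^n -> (-oo, +oo], proper, lsc, convex *)
  (forall y, Phi y != -oo%E) ->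
  (exists y, (Phi y < +oo)%E) ->
  lower_semicontinuous Phi ->
  econvex_on setT Phi ->
  (* S nonempty, Phi = sup of affine functions from S *)
  S !=set0 ->
  (forall y, Phi y = ereal_sup [set ((s.1 + dotv s.2 y)%:E) | s in S]) ->
  (* psi : [0,oo) -> [0,oo) superlinear *)
  (forall t, 0 <= t -> 0 <= psi t) ->
  (psi t / t @[t --> +oo] --> +oo) ->
  let D := [set p : R * 'rV[R]_n | 0 <= p.1] in
  (forall p, D p -> phi_tilde S psi p != -oo%E) /\
      econvex_on D (phi_tilde S psi) /\
      lsc_on D (phi_tilde S psi) /\
      (forall y, phi_tilde S psi (0, y) = Phi y) /\
      (forall x y, 0 < x -> (phi_tilde S psi (x, y) < +oo)%E) /\
      (forall y x1 x2, 0 <= x1 -> x1 <= x2 ->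
          (phi_tilde S psi (x2, y) <= phi_tilde S psi (x1, y))%E) /\
      (forall y, phi_tilde S psi (x, y) @[x --> 0^'+] --> Phi y).
Proof.
move=> _ _ _ _ [s0 Ss0] PhiE psi_ge0 psi_sup D.
have cge0 (s : R * 'rV[R]_n) : 0 <= psi (`|s.1| + enorm s.2).
  by apply: psi_ge0; rewrite addr_ge0 // enorm_ge0.
have mono y x1 x2 : 0 <= x1 -> x1 <= x2 ->
    (phi_tilde S psi (x2, y) <= phi_tilde S psi (x1, y))%E.
  move=> x10 le12; apply: ge_ereal_sup => _ [s Ss <-].
  apply: le_trans _ (ub_phi (x1, y) Ss); rewrite lee_fin /=.
  by rewrite lerD2l lerN2 ler_wpM2l.
have P4 y : phi_tilde S psi (0, y) = Phi y.
  rewrite PhiE /phi_tilde; congr ereal_sup; apply: eq_imagel => s _ /=.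
  by rewrite mulr0 subr0.
split.
  move=> p _; rewrite gt_eqF //.
  exact: lt_le_trans (ltNyr _) (ub_phi p Ss0).
split.
  move=> x y t Dx Dy t0 t1; apply: ge_ereal_sup => _ [s Ss <-] /=.
  set c := psi _.
  have -> : s.1 + dotv s.2 (t *: x.2 + (1 - t) *: y.2) - c * (t * x.1 + (1 - t) * y.1)
      = t * (s.1 + dotv s.2 x.2 - c * x.1) + (1 - t) * (s.1 + dotv s.2 y.2 - c * y.1).
    rewrite dotv_lin -[(1 - t) *: y.2]addr0 dotv_lin.
    have -> : dotv s.2 0 = 0 by rewrite /dotv big1 // => i _; rewrite mxE mulr0.
    ring.
  rewrite EFinD !EFinM; apply: leeD; apply: lee_wpmul2l.
  - by rewrite lee_fin ltW.
  - exact: ub_phi.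
  - by rewrite lee_fin subr_ge0 ltW.
  - exact: ub_phi.
split.
  move=> x a Dx /ereal_sup_gt [_ [s Ss <-]]; rewrite lte_fin => ha.
  have := g_cont s (psi (`|s.1| + enorm s.2)) x.
  move/cvgr_gt => /(_ a ha); apply: filterS => z hz _.
  by apply: lt_le_trans (ub_phi z Ss); rewrite lte_fin.
split; first exact: P4.
split.
  move=> x y x0.
  pose C := 1 + \sum_(i < n) `|y ord0 i|.
  have Y0 : 0 <= \sum_(i < n) `|y ord0 i| by apply: sumr_ge0.
  have := (proj1 (cvgryPge _) psi_sup) (C / x).
  move=> [M [Mr HM]].
  apply: (@le_lt_trans _ _ (C * Num.max M 0)%:E); last by rewrite ltry.
  apply: ge_ereal_sup => _ [s Ss <-]; rewrite lee_fin /=.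
  set t := `|s.1| + enorm s.2.
  have t0 : 0 <= t by rewrite addr_ge0 // enorm_ge0.
  have key : s.1 + dotv s.2 y <= C * t.
    have h1 := ler_norm s.1; have h2 := dotv_bound s.2 y.
    have h3 := enorm_ge0 s.2; have h4 : 0 <= `|s.1| by [].
    rewrite /C /t; nra.
  have cx : 0 <= psi t * x by rewrite mulr_ge0 ?(ltW x0) //; exact: (cge0 s).
  have m0 : 0 <= Num.max M 0 by rewrite le_max lexx orbT.
  have C0 : 0 <= C by rewrite addr_ge0.
  case: (lerP t (Num.max M 0)) => ht.
    have : C * t <= C * Num.max M 0 by rewrite ler_wpM2l.
    lra.
  move: ht; rewrite gt_max => /andP[Mt tp].
  have := HM t Mt.
  move=> h.
  have : C / x * (t * x) <= psi t / t * (t * x).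
    by rewrite ler_wpM2r // mulr_ge0 // ltW.
  have -> : C / x * (t * x) = C * t by field; rewrite gt_eqF.
  have -> : psi t / t * (t * x) = psi t * x by field; rewrite gt_eqF.
  have : 0 <= C * Num.max M 0 by rewrite mulr_ge0.
  lra.
split; first exact: mono.
move=> y.
have := @nonincreasing_at_right_cvge R (fun x => phi_tilde S psi (x, y)) 0
  (BInfty _ false) erefl.
have hm : {in Interval (BRight (0:R)) (BInfty _ false) &,
    nonincreasing_fun (fun x => phi_tilde S psi (x, y))}.
  move=> u v; rewrite !in_itv /= !andbT => u0 v0 uv.
  by apply: mono => //; exact: ltW.
move=> /(_ hm).
suff -> : ereal_sup ((fun x => phi_tilde S psi (x, y)) @`
    [set` Interval (BRight (0:R)) (BInfty _ false)]) = Phi y by [].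
apply/eqP; rewrite eq_le; apply/andP; split.
  apply: ge_ereal_sup => _ [u /= u0 <-].
  rewrite in_itv /= andbT in u0.
  by rewrite -P4; apply: mono => //; exact: ltW.
rewrite PhiE; apply: ge_ereal_sup => _ [s Ss <-].
apply/lee_addgt0Pr => e e0.
set c := psi (`|s.1| + enorm s.2).
have c0 : 0 <= c by exact: cge0.
pose u := e / (c + 1).
have c1 : 0 < c + 1 by rewrite ltr_wpDl.
have u0 : 0 < u by rewrite divr_gt0.
apply: (@le_trans _ _ ((s.1 + dotv s.2 y - c * u)%:E + e%:E)).
  rewrite -EFinD lee_fin.
  have : c * u <= e.
    rewrite /u mulrA ler_pdivrMr //; nra.
  lra.
apply: leeD2r.
apply: le_trans (ub_phi (u, y) Ss) _.
apply: ereal_sup_ubound; exists u => //=.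
by rewrite in_itv /= andbT.
Qed.
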